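(* Let $(X,\eta,\varepsilon,\tilde\mu)$ be a commutative Frobenius object in $\mathbf{Rel}$. If $\eta\cap\varepsilon \neq \emptyset$, then its partition function satisfies $Z(\Sigma_g) = T$ for all integers $g \ge 0$.
   Context: $\mathbf{Rel}$ is the symmetric monoidal category whose objects are sets, whose morphisms $X \to Y$ are relations $R \subseteq X \times Y$, composed by $S\circ R = \{(x,z) : \exists y,\ (x,y)\in R,\ (y,z)\in S\}$, with identity the diagonal, monoidal product the Cartesian product, and unit the one-point set $\{\bullet\}$. A relation $R \subseteq X\times Y$ is identified with the map $\tilde R: X \to \mathcal{P}(Y)$, $\tilde R(x) = \{y : (x,y)\in R\}$. A Frobenius object in $\mathbf{Rel}$ is a set $X$ with a unit $\eta \subseteq X$ (a relation $\{\bullet\}\to X$), a counit $\varepsilon \subseteq X$ (a relation $X \to \{\bullet\}$), and a multiplication $\mu \subseteq X\times X\times X$ (a relation $X\times X \to X$, with map $\tilde\mu$) satisfying unitality $\mu\circ(\mathbf{1}\times\eta)=\mu\circ(\eta\times\mathbf{1})=\mathbf{1}$, associativity $\mu\circ(\mathbf{1}\times\mu)=\mu\circ(\mu\times\mathbf{1})$, and nondegeneracy: there is a relation $\beta:\{\bullet\}\to X\times X$ with $(\varepsilon\times\mathbf{1})\circ(\mu\times\mathbf{1})\circ(\mathbf{1}\times\beta) = (\mathbf{1}\times\varepsilon)\circ(\mathbf{1}\times\mu)\circ(\beta\times\mathbf{1}) = \mathbf{1}$ (such $\beta$ is unique). The comultiplication is $\delta = (\mathbf{1}\times\mu)\circ(\beta\times\mathbf{1})$.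 It is commutative if $\tilde\mu(x,y)=\tilde\mu(y,x)$ for all $x,y$. The partition function on the closed orientable genus-$g$ surface is $Z(\Sigma_g) = \varepsilon\circ(\mu\circ\delta)^g\circ\eta \in \{\emptyset,\{\bullet\}\}$, with $\emptyset$ read as $F$ and $\{\bullet\}$ as $T$. *)

(* Defs.v *)
(* the category Rel with sets as types and relations as
   Prop-valued predicates; the one-point set is [unit]. *)


Definition hrel (A B : Type) := A -> B -> Prop.

Definition rcomp {A B C : Type} (S : hrel B C) (R : hrel A B) : hrel A C :=
  fun a c => exists b, R a b /\ S b c.

Definition rid (A : Type) : hrel A A := fun a b => a = b.

Definition rprod {A B C D : Type} (R : hrel A B) (S : hrel C D)
  : hrel (A * C) (B * D) :=
  fun p q => R (fst p) (fst q) /\ S (snd p) (snd q).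

Definition req {A B : Type} (R S : hrel A B) : Prop :=
  forall a b, R a b <-> S a b.

Definition rassoc (A B C : Type) : hrel ((A * B) * C) (A * (B * C)) :=
  fun p q => q = (fst (fst p), (snd (fst p), snd p)).
Definition rassoc_inv (A B C : Type) : hrel (A * (B * C)) ((A * B) * C) :=
  fun p q => q = ((fst p, fst (snd p)), snd (snd p)).
Definition runit_inv (A : Type) : hrel A (A * unit) := fun a p => p = (a, tt).
Definition lunit_inv (A : Type) : hrel A (unit * A) := fun a p => p = (tt, a).
Definition runit (A : Type) : hrel (A * unit) A := fun p a => a = fst p.
Definition lunit (A : Type) : hrel (unit * A) A := fun p a => a = snd p.

Section Frob.
Variables (X : Type) (eta : hrel unit X) (eps : hrel X unit)
          (mu : hrel (X * X) X) (beta : hrel unit (X * X)).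

Definition unital : Prop :=
  req (rcomp mu (rcomp (rprod (rid X) eta) (runit_inv X))) (rid X) /\
  req (rcomp mu (rcomp (rprod eta (rid X)) (lunit_inv X))) (rid X).

Definition associative : Prop :=
  req (rcomp (rcomp mu (rprod (rid X) mu)) (rassoc X X X))
      (rcomp mu (rprod mu (rid X))).

(* beta witnesses nondegeneracy (zig-zag identities) *)
Definition nondeg_witness : Prop :=
  req (rcomp (lunit X)
        (rcomp (rprod eps (rid X))
          (rcomp (rprod mu (rid X))
            (rcomp (rassoc_inv X X X)
              (rcomp (rprod (rid X) beta) (runit_inv X))))))
      (rid X) /\
  req (rcomp (runit X)
        (rcomp (rprod (rid X) eps)
          (rcomp (rprod (rid X) mu)
            (rcomp (rassoc X X X)
              (rcomp (rprod beta (rid X)) (lunit_inv X))))))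
      (rid X).


Definition comult : hrel X (X * X) :=
  rcomp (rprod (rid X) mu)
    (rcomp (rassoc X X X) (rcomp (rprod beta (rid X)) (lunit_inv X))).

Definition commutative : Prop :=
  forall x y z, mu (x, y) z <-> mu (y, x) z.

Fixpoint rpow (R : hrel X X) (n : nat) : hrel X X :=
  match n with
  | O => rid X
  | S n => rcomp R (rpow R n)
  end.

(* Z(Sigma_g) = eps o (mu o delta)^g o eta, a relation {*} -> {*};
   it is T iff it relates tt to tt. *)
Definition partition_fn (g : nat) : hrel unit unit :=
  rcomp eps (rcomp (rpow (rcomp mu comult) g) eta).

End Frob.

(* Main.v *)
Require Import Defs.
Lemma zigzag_facts (X : Type) (eta : hrel unit X) (eps : hrel X unit)
  (mu : hrel (X * X) X) (beta : hrel unit (X * X)) :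
  nondeg_witness X eps mu beta ->
  (forall a b, (exists b1 c, beta tt (b1,b) /\ mu (a,b1) c /\ eps c tt) -> a = b) /\
  (forall a, exists b2 c, beta tt (a,b2) /\ mu (b2,a) c /\ eps c tt).
Proof.
  intros [N1 N2]. unfold req, rcomp, rprod, rid, runit_inv, lunit_inv, runit, lunit, rassoc,
    rassoc_inv in *. split.
  - intros a b [b1 [c [Hb [Hm He]]]]. apply (proj1 (N1 a b)).
    exists (tt, b). split; [|reflexivity].
    exists (c, b). split; [|simpl; tauto].
    exists ((a, b1), b). split; [|simpl; tauto].
    exists (a, (b1, b)). split; [|reflexivity].
    exists (a, tt). simpl. tauto.
  - intro a. destruct (proj2 (N2 a a) eq_refl) as [[b u] [[[c1 c2] [[[d1 [d2 d3]] [Hq [Hd1 Hmu]]] Hc]] Hr]].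
    simpl in *. destruct Hc as [Hc1 Hc2]. destruct Hq as [[[f1 f2] f3] [[[t a'] [Ht [Hbt Ha']]] Hass]].
    simpl in *. injection Hass; intros; subst. simpl in *. injection Ht; intros; subst. destruct u.
    exists f2, c2. tauto.
Qed.

Theorem lemma4p2 (X : Type) (eta : hrel unit X) (eps : hrel X unit)
  (mu : hrel (X * X) X) (beta : hrel unit (X * X)) :
  unital X eta mu -> associative X mu -> nondeg_witness X eps mu beta ->
  commutative X mu ->
  (exists x, eta tt x /\ eps x tt) ->
  forall g : nat, partition_fn X eta eps mu beta g tt tt.
Proof.
  intros [U1 U2] _ HN C [e [He1 He2]].
  destruct (zigzag_facts X eta eps mu beta HN) as [N1 N2].
  unfold req, rcomp, rprod, rid, runit_inv in U1.
  assert (mee : mu (e, e) e).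
  { destruct (proj2 (U1 e e) eq_refl) as [[x' e'] [[p [Hp1 [Hr He']]] Hm]].
    subst p. simpl in *. subst x'.
    apply C in Hm.
    assert (Hu : e' = e).
    { apply (proj1 (U1 e' e)). exists (e', e). split; [|exact Hm].
      exists (e', tt). simpl. tauto. }
    subst e'. exact Hm. }
  assert (Hb : beta tt (e, e)).
  { destruct (N2 e) as [b2 [c [Hb [Hm Hc]]]].
    assert (Hb2 : e = b2).
    { apply N1. exists e, e. tauto. }
    subst b2. exact Hb. }
  assert (Hstep : rcomp mu (comult X mu beta) e e).
  { exists (e, e). split; [|exact mee].
    exists (e, (e, e)). split.
    - exists ((e, e), e). split.
      + exists (tt, e). split; [reflexivity|]. simpl. split; [exact Hb|reflexivity].
      + reflexivity.
    - simpl. split; [reflexivity|exact mee]. }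
  intro g. exists e. split; [|exact He2].
  exists e. split; [exact He1|].
  induction g as [|g IH]; simpl; [reflexivity|].
  exists e. split; [exact IH|exact Hstep].
Qed.
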